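(* Let $G$ be a group and $X \subseteq \mathbb{N}$. Then $\rho^{X}(G) = \mathrm{Tor}^{X}_{\omega}(G)$.
   Context: For a group $G$ and $X \subseteq \mathbb{N}$, the $X$-torsion of $G$ is $\mathrm{Tor}^{X}(G) := \{ g \in G \mid \exists n \in X \text{ with } g^{n} = e\}$, and $G$ is $X$-torsion-free if $\mathrm{Tor}^{X}(G) = \{e\}$. The $X$-torsion-free radical $\rho^{X}(G)$ is the intersection of all normal subgroups $N \trianglelefteq G$ such that $G/N$ is $X$-torsion-free. Define inductively $\mathrm{Tor}^{X}_{0}(G) := \{e\}$, $\mathrm{Tor}^{X}_{n+1}(G) := \langle\langle \{ g \in G \mid g\,\mathrm{Tor}^{X}_{n}(G) \in \mathrm{Tor}^{X}(G/\mathrm{Tor}^{X}_{n}(G))\} \rangle\rangle^{G}$ (normal closure in $G$), and $\mathrm{Tor}^{X}_{\omega}(G) := \bigcup_{n \in \mathbb{N}} \mathrm{Tor}^{X}_{n}(G)$. *)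

(* Defs.v *)
Record Group := {
  carrier :> Type;
  gmul : carrier -> carrier -> carrier;
  gone : carrier;
  ginv : carrier -> carrier;
  gmulA : forall x y z, gmul x (gmul y z) = gmul (gmul x y) z;
  gmul1l : forall x, gmul gone x = x;
  gmul1r : forall x, gmul x gone = x;
  gmulVl : forall x, gmul (ginv x) x = gone;
  gmulVr : forall x, gmul x (ginv x) = gone
}.

Arguments gmul {G} : rename.
Arguments gone {G} : rename.
Arguments ginv {G} : rename.

Fixpoint gpow {G : Group} (g : G) (n : nat) : G :=
  match n with
  | O => gone
  | S k => gmul g (gpow g k)
  end.

Definition is_normal_subgroup {G : Group} (N : G -> Prop) : Prop :=
  N gone /\
  (forall x y, N x -> N y -> N (gmul x y)) /\
  (forall x, N x -> N (ginv x)) /\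
  (forall x g, N x -> N (gmul (ginv g) (gmul x g))).

Definition normal_closure {G : Group} (S : G -> Prop) : G -> Prop :=
  fun g => forall N, is_normal_subgroup N -> (forall s, S s -> N s) -> N g.

Definition TorX (X : nat -> Prop) (G : Group) : G -> Prop :=
  fun g => exists n, X n /\ gpow g n = gone.

(* For a normal subgroup N, the coset gN lies in Tor^X(G/N) iff
   exists n in X with (gN)^n = N, i.e. g^n \in N.  This is the literal
   unfolding of torsion in the quotient group G/N. *)
Definition TorX_mod (X : nat -> Prop) {G : Group} (N : G -> Prop) : G -> Prop :=
  fun g => exists n, X n /\ N (gpow g n).

(* G/N is X-torsion-free: Tor^X(G/N) is trivial, i.e. every coset gN that is
   X-torsion equals N (i.e. g \in N). *)
Definition quotient_X_torsion_free (X : nat -> Prop) {G : Group} (N : G -> Prop) : Prop :=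
  forall g, TorX_mod X N g -> N g.

Definition rhoX (X : nat -> Prop) (G : Group) : G -> Prop :=
  fun g => forall N, is_normal_subgroup N -> quotient_X_torsion_free X N -> N g.

Fixpoint TorX_n (X : nat -> Prop) (G : Group) (n : nat) : G -> Prop :=
  match n with
  | O => fun g => g = gone
  | S k => normal_closure (TorX_mod X (TorX_n X G k))
  end.

Definition TorX_omega (X : nat -> Prop) (G : Group) : G -> Prop :=
  fun g => exists n, TorX_n X G n g.

(* Main.v *)
Require Import Defs.
From Stdlib Require Import Arith Lia.


Lemma nc_normal {G : Group} (S : G -> Prop) : is_normal_subgroup (normal_closure S).
Proof.
  unfold normal_closure; split; [|split; [|split]].
  - intros N [H _] _; exact H.
  - intros x y Hx Hy N HN HS. pose proof HN as (_ & Hm & _). apply Hm; [apply Hx|apply Hy]; auto.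
  - intros x Hx N HN HS. pose proof HN as (_ & _ & Hi & _). apply Hi; apply Hx; auto.
  - intros x g Hx N HN HS. pose proof HN as (_ & _ & _ & Hc). apply Hc; apply Hx; auto.
Qed.

Lemma nc_incl {G : Group} (S : G -> Prop) : forall s, S s -> normal_closure S s.
Proof. intros s Hs N _ HS; auto. Qed.

Lemma nc_mono {G : Group} (S T : G -> Prop) : (forall s, S s -> T s) ->
  forall g, normal_closure S g -> normal_closure T g.
Proof. intros H g Hg N HN HT. apply Hg; auto. Qed.

Lemma tor_mono (X : nat -> Prop) (G : Group) : forall k g, TorX_n X G k g -> TorX_n X G (S k) g.
Proof.
  induction k; intros g Hg.
  - simpl in Hg. subst g. exact (proj1 (nc_normal _)).
  - simpl. apply (nc_mono (TorX_mod X (TorX_n X G k))); auto.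
    intros s [n [Hn Hs]]. exists n; split; auto. exact (IHk _ Hs).
Qed.

Lemma tor_mono_le (X : nat -> Prop) (G : Group) : forall k m g, k <= m -> TorX_n X G k g -> TorX_n X G m g.
Proof.
  intros k m g Hle; induction Hle; auto. intros H; apply tor_mono; auto.
Qed.

Lemma omega_normal (X : nat -> Prop) (G : Group) : is_normal_subgroup (TorX_omega X G).
Proof.
  split; [|split; [|split]].
  - exists 0; reflexivity.
  - intros x y [a Ha] [b Hb]. exists (S (a + b)).
    apply (tor_mono_le X G a (S (a+b))) in Ha; [|lia].
    apply (tor_mono_le X G b (S (a+b))) in Hb; [|lia].
    simpl in *. apply (proj1 (proj2 (nc_normal _))); auto.
  - intros x [a Ha]. exists (S a). apply tor_mono in Ha. simpl in *. apply (proj1 (proj2 (proj2 (nc_normal _)))); auto.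
  - intros x g [a Ha]. exists (S a). apply tor_mono in Ha. simpl in *. apply (proj2 (proj2 (proj2 (nc_normal _)))); auto.
Qed.

Theorem proposition2p3 (G : Group) (X : nat -> Prop) :
  forall g : G, rhoX X G g <-> TorX_omega X G g.
Proof.
  intros g; split.
  - intros H. apply H. apply omega_normal.
    intros x [n [Hn [k Hk]]]. exists (S k). apply nc_incl. exists n; auto.
  - intros [k Hk] N HN HTF. revert g Hk. induction k; intros g Hk.
    + simpl in Hk; subst; apply HN.
    + simpl in Hk. apply Hk; auto.
      intros s [n [Hn Hs]]. apply HTF. exists n; auto.
Qed.
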